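(* Let $X_1,X_2,\dots$ be i.i.d. random variables each taking the values $-1,0,1$ with probability $1/3$ each. Then there exists a constant $c_7>0$ such that for all $N\in\mathbb{N}$, $$c_7\le\mathbb{P}^{(N)}_{\mathcal{R}}\Big(\bigcup_{n=1}^N\{\mathcal{R}^{(N)}_n=(n\bmod N)\}\Big).$$
   Context: $X_j$ live on $(\Omega,\mathcal{F},P)$, $S_n=\sum_{j=1}^nX_j$. For $N\in\mathbb{N}$, $X^{(N)}_0$ is uniform on $\{0,\dots,N-1\}$ under $(\Omega_N,\mathcal{F}_N,\mu_N)$; $(b\bmod N)$ is the remainder of $b\in\mathbb{Z}$ divided by $N$; $\mathcal{R}^{(N)}_n=(X^{(N)}_0+S_n\bmod N)$; $\mathbb{P}^{(N)}_{\mathcal{R}}=\mu_N\times P$. (This is the situation where the hunter moves one step forward each time.) *)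

(* Defs.v *)
From HB Require Import structures.
From mathcomp Require Import all_boot all_order all_algebra.
From mathcomp Require Import all_classical all_reals all_analysis.
Set Implicit Arguments. Unset Strict Implicit. Unset Printing Implicit Defensive.
Import Order.TTheory GRing.Theory Num.Theory.
Local Open Scope classical_set_scope.
Local Open Scope ring_scope.

Definition mutually_independent (R : realType) (d : measure_display)
  (T : measurableType d) (P : probability T R) (X : nat -> T -> R) : Prop :=
  forall (J : seq nat) (B : nat -> set R), uniq J ->
    (forall j, measurable (B j)) ->
    P [set w | forall j, j \in J -> B j (X j w)] =
      (\prod_(j <- J) P (X j @^-1` B j))%E.

Definition uniform_pm1_0 (R : realType) (d : measure_display)
  (T : measurableType d) (P : probability T R) (Y : T -> R) : Prop :=
  [/\ P (Y @^-1` [set -1]) = (3%:R^-1)%:E,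
      P (Y @^-1` [set 0]) = (3%:R^-1)%:E &
      P (Y @^-1` [set 1]) = (3%:R^-1)%:E].

(* Partial sums: X j stands for X_{j+1}, so S n = X_1 + ... + X_n. *)
Definition S (R : realType) (T : Type) (X : nat -> T -> R) (n : nat) (w : T) : R :=
  \sum_(j < n) X j w.

(* Event {R^(N)_n = (n mod N)} given X_0^(N) = x0, i.e.
   x0 + S_n is congruent to n modulo N. *)
Definition meet_at (R : realType) (T : Type) (X : nat -> T -> R)
  (N x0 n : nat) : set T :=
  [set w | exists k : int, x0%:R + S X n w - n%:R = k%:~R * N%:R].

(* P^(N)_R ( \bigcup_{n=1}^N {R^(N)_n = (n mod N)} ), where the product
   measure mu_N x P with mu_N uniform on {0,..,N-1} is written out:
   (1/N) * sum_{x0 < N} P(section at x0). *)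
Definition hit_prob (R : realType) (d : measure_display)
  (T : measurableType d) (P : probability T R) (X : nat -> T -> R)
  (N : nat) : \bar R :=
  ((N%:R^-1)%:E *
   \sum_(x0 < N) P [set w | exists n, (1 <= n <= N)%N /\ meet_at X N x0 n w])%E.

(* Main.v *)
Require Import Defs.
From HB Require Import structures.
From mathcomp Require Import all_boot all_order all_algebra.
From mathcomp Require Import all_classical all_reals all_analysis.
From mathcomp Require Import ring lra zify measurable_realfun.
Import Order.TTheory GRing.Theory Num.Theory.
Local Open Scope classical_set_scope.
Local Open Scope ring_scope.
Set Implicit Arguments.

Definition Wk {R : realType} {T : Type} (X : nat -> T -> R) (k : nat) (w : T) : R :=
  k%:R - S X k w.

Lemma W_succ (R : realType) (T : Type) (X : nat -> T -> R) k w :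
  Wk X k.+1 w = Wk X k w + 1 - X k w.
Proof. rewrite /Wk /S big_ord_recr /= -addn1 natrD; ring. Qed.

Lemma W_mono (R : realType) (T : Type) (X : nat -> T -> R) w k k' :
  (forall j, (j < k')%N -> X j w <= 1) -> (k <= k')%N -> Wk X k w <= Wk X k' w.
Proof.
move=> H kk; elim: k' kk H => [|k' IH].
  by rewrite leqn0 => /eqP -> _.
rewrite leq_eqVlt => /orP [/eqP -> //| kk] H.
apply: le_trans (IH kk (fun j hj => H j (ltnW hj))) _.
rewrite W_succ; have := H k' (ltnSn _); lra.
Qed.

Lemma W_nat (R : realType) (T : Type) (X : nat -> T -> R) w k :
  (forall j, (j < k)%N -> [\/ X j w = -1, X j w = 0 | X j w = 1]) ->
  exists m : nat, Wk X k w = m%:R /\ (m <= 2 * k)%N.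
Proof.
elim: k => [|k IH] H.
  by exists 0%N; rewrite /Wk /S big_ord0; split => //; rewrite subr0.
have [m [Hm Hm2]] := IH (fun j hj => H j (ltnW hj)).
rewrite W_succ Hm.
case: (H k (ltnSn _)) => ->.
- exists m.+2; split; last by lia.
  by rewrite -addn2 natrD; ring.
- exists m.+1; split; last by lia.
  by rewrite -addn1 natrD; ring.
- by exists m; split; [ring | lia].
Qed.

Lemma mpre (R : realType) d (T : measurableType d) (f : T -> R) (Y : set R) :
  measurable_fun setT f -> measurable Y -> measurable (f @^-1` Y).
Proof. by move=> mf mY; have := mf measurableT Y mY; rewrite setTI. Qed.

Lemma mW (R : realType) d (T : measurableType d) (X : nat -> T -> R) k :
  (forall j, measurable_fun setT (X j)) -> measurable_fun setT (Wk X k).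
Proof.
move=> mX; apply: measurable_funB; first exact: measurable_cst.
exact: measurable_sum.
Qed.

Definition Cs {R : realType} {T : Type} (X : nat -> T -> R) (k : nat) : set T :=
  \bigcap_j [set w | (j <= k)%N -> X j w <= 1].

Definition Ap {R : realType} {T : Type} (X : nat -> T -> R) (x0 k : nat) : set T :=
  Wk X k.+1 @^-1` [set x0%:R] `&` Wk X k @^-1` `]-oo, x0%:R[ `&` Cs X k.

Lemma mCs (R : realType) d (T : measurableType d) (X : nat -> T -> R) k :
  (forall j, measurable_fun setT (X j)) -> measurable (Cs X k).
Proof.
move=> mX; apply: bigcapT_measurable => j.
case: (leqP j k) => hj.
  rewrite (_ : [set w | _] = X j @^-1` `]-oo, 1]); last first.
    by apply/seteqP; split => w /=; rewrite in_itv /= ?hj; [move=> /(_ isT) | move=> h _].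
  by apply: mpre => //; exact: measurable_itv.
rewrite (_ : [set w | _] = setT) //.
by apply/seteqP; split => w //= _; rewrite leqNgt hj.
Qed.

Lemma mAp (R : realType) d (T : measurableType d) (X : nat -> T -> R) x0 k :
  (forall j, measurable_fun setT (X j)) -> measurable (Ap X x0 k).
Proof.
move=> mX; apply: measurableI; last exact: mCs.
apply: measurableI; apply: mpre; try exact: mW.
- exact: measurable_set1.
- exact: measurable_itv.
Qed.

Lemma Ap_disj_k (R : realType) (T : Type) (X : nat -> T -> R) x0 :
  trivIset setT (fun k => Ap X x0 k).
Proof.
move=> i j _ _ [w [[[Hi1 Hi2] Hi3] [[Hj1 Hj2] Hj3]]].
move: Hi2 Hj2; rewrite /= !in_itv /= => Hi2 Hj2.
wlog ij : i j Hi1 Hi2 Hi3 Hj1 Hj2 Hj3 / (i <= j)%N.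
  move=> H; case: (leqP i j) => ij; first exact: H.
  by apply/esym/H => //; exact: ltnW.
move: ij; rewrite leq_eqVlt => /orP [/eqP //|ij]; exfalso.
have : Wk X i.+1 w <= Wk X j w.
  by apply: (@W_mono _ _ X w i.+1 j) => // l hl; exact: (Hj3 l I (ltnW hl)).
by rewrite Hi1; move: Hj2; rewrite ltNge => /negP.
Qed.

Lemma Ap_disj_x (R : realType) (T : Type) (X : nat -> T -> R) k :
  trivIset setT (fun x0 => Ap X x0 k).
Proof.
move=> i j _ _ [w [[[Hi1 _] _] [[Hj1 _] _]]].
by apply/eqP; rewrite -(eqr_nat R) -Hi1 -Hj1.
Qed.

Lemma Ap_meet (R : realType) (T : Type) (X : nat -> T -> R) N x0 k :
  Ap X x0 k `<=` meet_at X N x0 k.+1.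
Proof.
move=> w [[H1 _] _]; exists 0; rewrite mul0r.
by rewrite -H1 /Wk; ring.
Qed.

Definition Bs {R : realType} (k j : nat) : set R :=
  if j == k then [set -1] `|` [set 0] else [set -1] `|` [set 0] `|` [set 1].

Definition Hs {R : realType} {T : Type} (X : nat -> T -> R) (k : nat) : set T :=
  [set w | forall j, j \in iota 0 k.+1 -> Bs k j (X j w)].

Lemma H_sub (R : realType) (T : Type) (X : nat -> T -> R) N k :
  (2 * k.+1 < N)%N -> Hs X k `<=` \big[setU/set0]_(x0 < N) Ap X x0 k.
Proof.
move=> hN w Hw; rewrite -(bigcup_mkord N (fun x0 => Ap X x0 k)).
have Hj : forall j, (j <= k)%N -> [\/ X j w = -1, X j w = 0 | X j w = 1].
  move=> j hj; have := Hw j; rewrite mem_iota /= add0n ltnS hj => /(_ isT).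
  rewrite /Bs; case: eqP => _ /=.
    by case => -> ; [apply: Or31 | apply: Or32].
  by case => [[]|] -> ; [apply: Or31 | apply: Or32 | apply: Or33].
have [m [Hm Hm2]] := @W_nat _ _ X w k (fun j hj => Hj j (ltnW hj)).
have Hk : X k w = -1 \/ X k w = 0.
  have := Hw k; rewrite mem_iota /= add0n ltnS leqnn /Bs eqxx => /(_ isT).
  by case => ->; [left|right].
have HC : Cs X k w.
  move=> j _ /= hj; case: (Hj j hj) => ->; lra.
case: Hk => Hk.
- exists m.+2; first by rewrite /=; lia.
  split => //; split => /=.
    by rewrite W_succ Hm Hk -addn2 natrD; ring.
  by rewrite in_itv /= Hm ltr_nat.
- exists m.+1; first by rewrite /=; lia.
  split => //; split => /=.
    by rewrite W_succ Hm Hk -addn1 natrD; ring.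
  by rewrite in_itv /= Hm ltr_nat.
Qed.

Lemma mpre1 (R : realType) d (T : measurableType d) (f : T -> R) (a : R) :
  measurable_fun setT f -> measurable (f @^-1` [set a]).
Proof. by move=> mf; apply: mpre => //; exact: measurable_set1. Qed.

Lemma P2 (R : realType) d (T : measurableType d) (P : probability T R)
  (Y : T -> R) : measurable_fun setT Y -> uniform_pm1_0 P Y ->
  P (Y @^-1` ([set -1] `|` [set 0])) = (2%:R / 3%:R)%:E.
Proof.
move=> mY [h1 h2 h3]; rewrite preimage_setU.
transitivity (P (Y @^-1` [set (-1)%R]) + P (Y @^-1` [set 0%R]))%E.
  apply: measureU; try exact: mpre1.
  by apply/seteqP; split => w //= [-> ]; lra.
by rewrite h1 h2 -EFinD; congr EFin; field.
Qed.

Lemma P3 (R : realType) d (T : measurableType d) (P : probability T R)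
  (Y : T -> R) : measurable_fun setT Y -> uniform_pm1_0 P Y ->
  P (Y @^-1` ([set -1] `|` [set 0] `|` [set 1])) = 1%E.
Proof.
move=> mY hu; have [h1 h2 h3] := hu.
rewrite [in LHS]preimage_setU.
transitivity (P (Y @^-1` ([set (-1)%R] `|` [set 0%R])) + P (Y @^-1` [set 1%R]))%E.
  apply: measureU; try exact: mpre1.
  - by apply: mpre => //; apply: measurableU; exact: measurable_set1.
  - by apply/seteqP; split => w //= [[->|->] ]; lra.
by rewrite P2 // h3 -EFinD; congr EFin; field.
Qed.

Lemma PH (R : realType) d (T : measurableType d) (P : probability T R)
  (X : nat -> T -> R) k :
  (forall j, measurable_fun setT (X j)) ->
  mutually_independent P X ->
  (forall j, uniform_pm1_0 P (X j)) ->
  P (Hs X k) = (2%:R / 3%:R)%:E.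
Proof.
move=> mX hI hU; rewrite /Hs hI ?iota_uniq //; last first.
  move=> j; rewrite /Bs; case: eqP => _; repeat apply: measurableU; exact: measurable_set1.
rewrite -addn1 iotaD big_cat /= add0n big_seq1 /Bs eqxx P2 //.
rewrite big_seq big1 ?mul1e // => j; rewrite mem_iota add0n => /andP [_ hj].
by rewrite (introF eqP) ?P3 //; move=> e; move: hj; rewrite e ltnn.
Qed.

Definition Aset {R : realType} {T : Type} (X : nat -> T -> R) (N x0 : nat) : set T :=
  [set w | exists n, (1 <= n <= N)%N /\ meet_at X N x0 n w].

Lemma mAset (R : realType) d (T : measurableType d) (X : nat -> T -> R) N x0 :
  (forall j, measurable_fun setT (X j)) -> measurable (Aset X N x0).
Proof.
move=> mX.
have -> : Aset X N x0 = \bigcup_(n in [set n | (1 <= n <= N)%N]) meet_at X N x0 n.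
  by apply/seteqP; split => w /= [n]; [move=> [h1 h2]; exists n | move=> h1 h2; exists n].
apply: bigcup_measurable => n _.
have -> : meet_at X N x0 n = \bigcup_(k : int)
    ((fun w => x0%:R + S X n w - n%:R) @^-1` [set k%:~R * N%:R]).
  by apply/seteqP; split => w /= [k hk]; exists k.
apply: countable_bigcupT_measurable; first exact: countableP.
move=> k; apply: mpre; last exact: measurable_set1.
apply: measurable_funB; last exact: measurable_cst.
apply: measurable_funD; first exact: measurable_cst.
exact: measurable_sum.
Qed.

Lemma mHs (R : realType) d (T : measurableType d) (X : nat -> T -> R) k :
  (forall j, measurable_fun setT (X j)) -> measurable (Hs X k).
Proof.
move=> mX.
have -> : Hs X k = \bigcap_(j in [set j | (j <= k)%N]) (X j @^-1` Bs k j).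
  apply/seteqP; split => w /= hw j.
    by move=> hj; apply: hw; rewrite mem_iota add0n ltnS hj.
  by rewrite mem_iota add0n ltnS => hj; apply: hw.
apply: bigcap_measurable; first by exists 0%N.
move=> j _; apply: mpre => //.
rewrite /Bs; case: eqP => _; repeat apply: measurableU; exact: measurable_set1.
Qed.

Theorem proposition2 (R : realType) (d : measure_display)
  (T : measurableType d) (P : probability T R) (X : nat -> T -> R) :
  (forall j, measurable_fun setT (X j)) ->
  mutually_independent P X ->
  (forall j, uniform_pm1_0 P (X j)) ->
  exists c7 : R, 0 < c7 /\
    forall N : nat, (0 < N)%N -> (c7%:E <= hit_prob P X N)%E.
Proof.
move=> mX hI hU; exists (1 / 6%:R); split; first by rewrite divr_gt0.
move=> N N0.
have key : ((N%:R / 6%:R)%:E <= \sum_(x0 < N) P (Aset X N x0))%E.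
  case: (leqP N 2) => hN.
    case: N N0 hN => // N' _ hN.
    rewrite big_ord_recl /=.
    apply: le_trans (leeDl _ _); last by apply: sume_ge0 => i _.
    apply: (@le_trans _ _ (P (X 0%N @^-1` [set 1]))).
      have [_ _ ->] := hU 0%N; rewrite lee_fin.
      have : (N'.+1 <= 2)%N := hN. rewrite -(ler_nat R) => h.
      move: h; set u := (N'.+1)%:R; move=> h; lra.
    apply: le_measure; rewrite ?inE; [exact: mpre1 | exact: mAset |].
    move=> w /= hw; exists 1%N; split => //; exists 0.
    by rewrite mul0r /S big_ord1 hw; ring.
  pose m := (N.-1 %/ 2)%N.
  have hm : forall k, (k < m)%N -> (2 * k.+1 < N)%N by move=> k; rewrite /m; lia.
  apply: (@le_trans _ _ (\sum_(x0 < N) P (\big[setU/set0]_(k < m) Ap X x0 k))%E); last first.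
    apply: lee_sum => x0 _; apply: le_measure; rewrite ?inE.
    - by apply: bigsetU_measurable => k _; exact: mAp.
    - exact: mAset.
    rewrite -(bigcup_mkord m (fun k => Ap X x0 k)) => w [k /= hk hw].
    exists k.+1; split; first by have := hm k hk; lia.
    exact: Ap_meet.
  have e1 : forall x0 : 'I_N, P (\big[setU/set0]_(k < m) Ap X x0 k) =
      (\sum_(k < m) P (Ap X x0 k))%E.
    move=> x0; apply: measure_bigsetU; [move=> k; exact: mAp | exact: Ap_disj_k].
  rewrite (eq_bigr _ (fun x0 _ => e1 x0)) exchange_big /=.
  have e2 : forall k : 'I_m, (\sum_(x0 < N) P (Ap X x0 k))%E =
      P (\big[setU/set0]_(x0 < N) Ap X x0 k).
    move=> k; apply/esym; apply: (@measure_bigsetU _ _ _ P (fun x0 => Ap X x0 k)).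
    - move=> x0; exact: mAp.
    - exact: Ap_disj_x.
  rewrite (eq_bigr _ (fun k _ => e2 k)).
  apply: (@le_trans _ _ (\sum_(k < m) P (Hs X k))%E); last first.
    apply: lee_sum => k _; apply: le_measure; rewrite ?inE.
    - exact: mHs.
    - by apply: bigsetU_measurable => x0 _; exact: mAp.
    exact: H_sub (hm k (ltn_ord k)).
  rewrite (eq_bigr _ (fun (k : 'I_m) _ => PH k mX hI hU)) sumEFin sumr_const card_ord lee_fin.
  have h4 : (N <= 4 * m)%N by rewrite /m; lia.
  move: h4; rewrite -(ler_nat R) natrM -mulr_natr.
  set u := N%:R; set v := m%:R => h4; lra.
rewrite /hit_prob; apply: le_trans (lee_wpmul2l _ key).
  by rewrite -EFinM lee_fin mulrA mulVf ?mul1r // pnatr_eq0 -lt0n.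
by rewrite lee_fin invr_ge0.
Qed.
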